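(* Let $\mathscr{B}=\{A,B,C,D\}$ and let $S$ be the substitution $A\mapsto AB$, $B\mapsto AC$, $C\mapsto DB$, $D\mapsto DC$, with associated (Golay-Rudin-Shapiro) subshift $\Xi\subseteq\mathscr{B}^{\mathbb{Z}}$. For $x\in\{A,B,C,D\}$ and $k\in\mathbb{N}$ let $\eta^x_k=(S^k(x))^\infty$ and $\Xi^x_k=\mathrm{Orb}(\eta^x_k)$. Then $\Xi$ is periodically approximable and for each $x\in\{A,B,C,D\}$ the sequence $(\Xi^x_k)_k$ converges to $\Xi$ in the Hausdorff topology.
   Context: $S$ extends to finite words as a homomorphism for concatenation. The associated subshift is $\Xi=\{\xi\in\mathscr{B}^{\mathbb{Z}}:\text{every finite subword of }\xi\text{ is a subword of some }S^n(c),\ n\in\mathbb{N},\ c\in\mathscr{B}\}$. For a finite word $u$, $u^\infty$ is the two-sided periodic sequence repeating $u$. $\mathscr{B}^{\mathbb{Z}}$ has the product topology and shift $(T\xi)(j)=\xi(j-1)$, $\mathrm{Orb}(\eta)=\{T^n\eta:n\in\mathbb{Z}\}$. Subshifts (non-empty closed $T$-invariant subsets) carry the Hausdorff (Vietoris) topology (basis: $\{\Xi:\Xi\cap F=\emptyset,\Xi\cap O\neq\emptyset\ \forall O\in\mathcal{F}\}$, $F$ closed, $\mathcal{F}$ a finite family of open sets). Periodically approximable means being a limit of subshifts $\mathrm{Orb}(\eta)$ with $\eta$ periodic. *)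

(* Defs.v *)
From Stdlib Require Import ZArith List Arith.
Import ListNotations.
Open Scope Z_scope.

Inductive letter : Type := A | B | C | D.

Definition config := Z -> letter.
Definition cset := config -> Prop.

Definition subst_word (S : letter -> list letter) (w : list letter) : list letter :=
  flat_map S w.

Definition subst_iter (S : letter -> list letter) (n : nat) (c : letter) : list letter :=
  Nat.iter n (subst_word S) [c].

Definition subword (u w : list letter) : Prop :=
  exists p s, w = p ++ u ++ s.

Definition word_at (xi : config) (i : Z) (n : nat) : list letter :=
  map (fun j => xi (i + Z.of_nat j)) (seq 0 n).

Definition subshift_of (S : letter -> list letter) : cset :=
  fun xi => forall (i : Z) (n : nat),
    exists (k : nat) (c : letter), subword (word_at xi i n) (subst_iter S k c).

Definition GRS (x : letter) : list letter :=
  match x with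
  | A => [A; B]
  | B => [A; C]
  | C => [D; B]
  | D => [D; C]
  end.

Definition GRS_subshift : cset := subshift_of GRS.

Definition per_ext (u : list letter) : config :=
  fun j => nth (Z.to_nat (j mod Z.of_nat (length u))) u A.

Definition shift (xi : config) : config := fun j => xi (j - 1).
Definition shift_pow (n : Z) (xi : config) : config := fun j => xi (j - n).

Definition Orb (eta : config) : cset :=
  fun xi => exists n : Z, xi = shift_pow n eta.

Definition periodic (eta : config) : Prop :=
  exists p : Z, 0 < p /\ forall j, eta (j + p) = eta j.

(* Product topology on B^Z (B discrete): open sets are unions of cylinders. *)
Definition is_open (O : cset) : Prop :=
  forall xi, O xi -> exists n : nat, forall eta,
    (forall j, Z.abs j <= Z.of_nat n -> eta j = xi j) -> O eta.

Definition is_closed (F : cset) : Prop := is_open (fun xi => ~ F xi).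

(* Convergence of a sequence of subshifts in the Vietoris (Hausdorff)
   topology, tested on the subbasic open sets
   {Xi : Xi cap F = empty} (F closed) and {Xi : Xi cap O <> empty} (O open). *)
Definition vietoris_cvg (X : nat -> cset) (Y : cset) : Prop :=
  (forall F, is_closed F -> (forall xi, Y xi -> ~ F xi) ->
     exists N, forall k, (N <= k)%nat -> forall xi, X k xi -> ~ F xi) /\
  (forall O, is_open O -> (exists xi, Y xi /\ O xi) ->
     exists N, forall k, (N <= k)%nat -> exists xi, X k xi /\ O xi).

Definition periodically_approximable (Y : cset) : Prop :=
  exists eta : nat -> config, (forall k, periodic (eta k)) /\
    vietoris_cvg (fun k => Orb (eta k)) Y.

Definition eta_GRS (x : letter) (k : nat) : config := per_ext (subst_iter GRS k x).

(* Main.v *)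
Require Import Defs.
From Stdlib Require Import ZArith List Arith Lia Classical ClassicalEpsilon.
Import ListNotations.
Open Scope Z_scope.

Definition legal (w : list letter) : Prop :=
  exists (k : nat) (c : letter), subword w (subst_iter GRS k c).
Definition iterW (n : nat) (u : list letter) := Nat.iter n (subst_word GRS) u.
Definition G (N : nat) (xi : config) : Prop :=
  legal (word_at xi (- Z.of_nat N) (2 * N + 1)).

Lemma subword_refl u : subword u u.
Proof. exists [], []. now rewrite app_nil_r. Qed.

Lemma subword_trans u v w : subword u v -> subword v w -> subword u w.
Proof.
  intros [p [s ->]] [p' [s' ->]]. exists (p' ++ p), (s ++ s').
  now rewrite !app_assoc.
Qed.

Lemma legal_sub u v : subword u v -> legal v -> legal u.
Proof. intros H [k [c H']]. exists k, c. eapply subword_trans; eauto. Qed.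

Lemma iterW_app n u v : iterW n (u ++ v) = iterW n u ++ iterW n v.
Proof.
  induction n; simpl; auto. unfold iterW in *. simpl. rewrite IHn.
  unfold subst_word. now rewrite flat_map_app.
Qed.

Lemma iterW_subword n u v : subword u v -> subword (iterW n u) (iterW n v).
Proof.
  intros [p [s ->]]. exists (iterW n p), (iterW n s). now rewrite !iterW_app.
Qed.

Lemma iterW_add n m u : iterW n (iterW m u) = iterW (n + m) u.
Proof. unfold iterW. now rewrite Nat.iter_add. Qed.

Lemma length_subst u : length (subst_word GRS u) = (2 * length u)%nat.
Proof.
  unfold subst_word. induction u as [|a u IH]; simpl; auto.
  destruct a; simpl; rewrite IH; lia.
Qed.

Lemma length_iterW n u : length (iterW n u) = (2 ^ n * length u)%nat.
Proof.
  induction n; simpl. lia. unfold iterW in *; simpl. rewrite length_subst, IHn. lia.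
Qed.

Lemma subst_iter_iterW k c : subst_iter GRS k c = iterW k [c].
Proof. reflexivity. Qed.

Lemma word_at_S xi s n : word_at xi s (S n) = xi s :: word_at xi (s + 1) n.
Proof.
  unfold word_at. simpl. f_equal. f_equal; lia.
  rewrite <- seq_shift, map_map. apply map_ext. intros j. f_equal. lia.
Qed.

Lemma word_at_app xi s a b :
  word_at xi s (a + b) = word_at xi s a ++ word_at xi (s + Z.of_nat a) b.
Proof.
  revert s. induction a; intros s.
  - simpl. replace (s + 0) with s by lia. reflexivity.
  - change (S a + b)%nat with (S (a + b)). rewrite !word_at_S, IHa. simpl.
    do 3 f_equal. lia.
Qed.

Lemma word_at_sub xi s M i L :
  s <= i -> i + Z.of_nat L <= s + Z.of_nat M ->
  subword (word_at xi i L) (word_at xi s M).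
Proof.
  intros H1 H2.
  assert (HM : M = (Z.to_nat (i - s) + L + (M - Z.to_nat (i - s) - L))%nat) by lia.
  rewrite HM, !word_at_app.
  exists (word_at xi s (Z.to_nat (i - s))), (word_at xi (s + Z.of_nat (Z.to_nat (i - s) + L))
      (M - Z.to_nat (i - s) - L)).
  rewrite <- app_assoc. do 2 f_equal. f_equal. lia.
Qed.

Lemma G_mono N N' e : (N <= N')%nat -> G N' e -> G N e.
Proof.
  intros H. unfold G. apply legal_sub. apply word_at_sub; lia.
Qed.

Lemma word_at_shift n e i L : word_at (shift_pow n e) i L = word_at e (i - n) L.
Proof. unfold word_at, shift_pow. apply map_ext. intros j. f_equal. lia. Qed.

Lemma length_word_at xi i L : length (word_at xi i L) = L.
Proof. unfold word_at. now rewrite length_map, length_seq. Qed.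

Lemma nth_word_at xi i L t : (t < L)%nat -> nth t (word_at xi i L) A = xi (i + Z.of_nat t).
Proof.
  intros H. unfold word_at.
  set (g := fun j : nat => xi (i + Z.of_nat j)).
  rewrite nth_indep with (d' := g 0%nat) by (rewrite length_map, length_seq; lia).
  rewrite map_nth, seq_nth by lia. reflexivity.
Qed.

Lemma word_in_list f i L V r :
  (r + L <= length V)%nat ->
  (forall t, (t < L)%nat -> f (i + Z.of_nat t) = nth (r + t) V A) ->
  subword (word_at f i L) V.
Proof.
  intros HL Hf. exists (firstn r V), (skipn (L + r) V).
  rewrite <- skipn_skipn.
  assert (E : word_at f i L = firstn L (skipn r V)).
  { apply nth_ext with (d := A) (d' := A).
    - rewrite length_word_at, length_firstn, length_skipn. lia.
    - intros t Ht. rewrite length_word_at in Ht.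
      rewrite nth_word_at by lia. rewrite nth_firstn.
      destruct (Nat.ltb_spec t L); [|lia]. rewrite nth_skipn. auto. }
  rewrite E, !firstn_skipn. reflexivity.
Qed.

Lemma per_window P Q i L : length P = length Q -> (0 < length P)%nat ->
  (L <= length P)%nat -> subword (word_at (per_ext (P ++ Q)) i L) (P ++ Q ++ P).
Proof.
  intros HPQ Hpos HL.
  set (h := length P) in *.
  assert (Hlen : length (P ++ Q) = (2 * h)%nat) by (rewrite length_app; lia).
  set (len := Z.of_nat (length (P ++ Q))).
  assert (Hlenpos : 0 < len) by (unfold len; lia).
  pose proof (Z.mod_pos_bound i len Hlenpos) as Hb.
  set (r := Z.to_nat (i mod len)).
  assert (Hr : Z.of_nat r = i mod len) by (unfold r; lia).
  apply word_in_list with (r := r).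
  - rewrite !length_app. unfold len in *. lia.
  - intros t Ht. unfold per_ext. fold len.
    rewrite <- Zplus_mod_idemp_l. rewrite app_assoc.
    destruct (lt_dec (r + t) (2 * h)) as [Hlt|Hge].
    + assert (0 <= i mod len + Z.of_nat t < len) by (unfold len in *; lia). rewrite Z.mod_small by assumption.
      replace (Z.to_nat (i mod len + Z.of_nat t)) with (r + t)%nat by (unfold len in *; lia).
      rewrite (app_nth1 (P ++ Q) P) by lia. reflexivity.
    + replace (i mod len + Z.of_nat t) with ((i mod len + Z.of_nat t - len) + 1 * len) by lia.
      rewrite Z_mod_plus_full.
      rewrite Z.mod_small by (unfold len in *; lia).
      replace (Z.to_nat (i mod len + Z.of_nat t - len)) with (r + t - 2 * h)%nat
        by (unfold len in *; lia).
      rewrite (app_nth2 (P ++ Q)) by lia. rewrite Hlen.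
      rewrite app_nth1 by lia. reflexivity.
Qed.

Lemma GRS_pair x : exists p q, subst_word GRS [x] = [p; q] /\ legal [p; q; p].
Proof.
  destruct x.
  - exists A, B. split. reflexivity. exists 2%nat, A. exists [], [C]. reflexivity.
  - exists A, C. split. reflexivity. exists 3%nat, A. exists [A; B], [B; D; B]. reflexivity.
  - exists D, B. split. reflexivity. exists 3%nat, D. exists [D; C], [C; A; C]. reflexivity.
  - exists D, C. split. reflexivity. exists 2%nat, D. exists [], [B]. reflexivity.
Qed.

Lemma legal_window x k i L : (1 <= k)%nat -> (L <= 2 ^ (k - 1))%nat ->
  legal (word_at (eta_GRS x k) i L).
Proof.
  intros Hk HL.
  destruct (GRS_pair x) as [p [q [Hpq [j [c Hleg]]]]].
  unfold eta_GRS. rewrite subst_iter_iterW.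
  destruct k as [|k']; [lia|]. replace (S k' - 1)%nat with k' in HL by lia.
  replace (S k') with (k' + 1)%nat by lia.
  rewrite <- iterW_add. change (iterW 1 [x]) with (subst_word GRS [x]). rewrite Hpq.
  change [p; q] with ([p] ++ [q]). rewrite iterW_app.
  pose proof (Nat.pow_nonzero 2 k').
  eapply legal_sub. apply per_window.
  - rewrite !length_iterW. reflexivity.
  - rewrite length_iterW. simpl. lia.
  - rewrite length_iterW. simpl. lia.
  - rewrite <- !iterW_app. simpl. exists (k' + j)%nat, c.
    rewrite subst_iter_iterW, <- iterW_add. apply iterW_subword. exact Hleg.
Qed.

Lemma in_sub c l : In c l -> subword [c] l.
Proof. intros H. destruct (in_split _ _ H) as [l1 [l2 ->]]. now exists l1, l2. Qed.

Lemma all_letters m y c : (3 <= m)%nat -> subword [c] (iterW m [y]).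
Proof.
  intros Hm. replace m with (3 + (m - 3))%nat by lia. rewrite <- iterW_add.
  destruct (iterW (m - 3) [y]) as [|z rest] eqn:E.
  - exfalso. pose proof (length_iterW (m - 3) [y]) as Hl. rewrite E in Hl. simpl in Hl.
    pose proof (Nat.pow_nonzero 2 (m - 3)). lia.
  - eapply subword_trans; [| apply (iterW_subword 3 [z]); exists [], rest; reflexivity].
    apply in_sub. destruct z, c; cbn; repeat (try (left; reflexivity); right).
Qed.

Section Kon.
Variable F : cset.

Definition goodP (P : Z -> Prop) (u : config) : Prop :=
  forall N, exists e, F e /\ G N e /\ forall j, P j -> e j = u j.

Definition upd (u : config) (p : Z) (a : letter) : config :=
  fun j => if Z.eq_dec j p then a else u j.

Lemma goodP_anti P P' u : goodP P u -> (forall j, P' j -> P j) -> goodP P' u.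
Proof.
  intros H HP N. destruct (H N) as [e [He1 [He2 He3]]]. exists e. repeat split; auto.
Qed.

Lemma step1 P u p : goodP P u -> exists a, goodP (fun j => P j \/ j = p) (upd u p a).
Proof.
  intros H. apply NNPP. intros Hn.
  assert (Hb : forall a, exists N, forall e, F e -> G N e ->
     ~ (forall j, P j \/ j = p -> e j = upd u p a j)).
  { intros a. apply NNPP. intros Ha. apply Hn. exists a. intros N.
    apply NNPP. intros HN. apply Ha. exists N. intros e He1 He2 He3.
    apply HN. exists e. auto. }
  destruct (Hb A) as [NA HA], (Hb B) as [NB HB], (Hb C) as [NC HC], (Hb D) as [ND HD].
  destruct (H (NA + NB + NC + ND)%nat) as [e [He1 [He2 He3]]].
  assert (Hag : forall j, P j \/ j = p -> e j = upd u p (e p) j).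
  { intros j Hj. unfold upd. destruct (Z.eq_dec j p). subst; auto.
    destruct Hj; [auto|congruence]. }
  destruct (e p) eqn:Ep.
  - eapply HA; eauto. eapply G_mono; [|eauto]. lia.
  - eapply HB; eauto. eapply G_mono; [|eauto]. lia.
  - eapply HC; eauto. eapply G_mono; [|eauto]. lia.
  - eapply HD; eauto. eapply G_mono; [|eauto]. lia.
Qed.

Definition W (m : nat) (j : Z) : Prop := Z.abs j < Z.of_nat m.

Lemma step m u : goodP (W m) u ->
  exists v, goodP (W (S m)) v /\ forall j, W m j -> v j = u j.
Proof.
  intros H. destruct (step1 _ _ (- Z.of_nat m) H) as [a Ha].
  destruct (step1 _ _ (Z.of_nat m) Ha) as [b Hb].
  eexists. split.
  - eapply goodP_anti. exact Hb. intros j Hj. unfold W in *. lia.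
  - intros j Hj. unfold W, upd in *.
    destruct (Z.eq_dec j (Z.of_nat m)); [lia|].
    destruct (Z.eq_dec j (- Z.of_nat m)); [lia|]. reflexivity.
Qed.

Lemma next_ex m u : exists v, goodP (W m) u ->
  goodP (W (S m)) v /\ forall j, W m j -> v j = u j.
Proof.
  destruct (classic (goodP (W m) u)) as [H|H].
  - destruct (step m u H) as [v Hv]. exists v. auto.
  - exists u. tauto.
Qed.

Definition next m u := proj1_sig (constructive_indefinite_description _ (next_ex m u)).

Lemma next_spec m u : goodP (W m) u ->
  goodP (W (S m)) (next m u) /\ forall j, W m j -> next m u j = u j.
Proof. unfold next. destruct (constructive_indefinite_description _ _). auto. Qed.

Fixpoint U (m : nat) : config :=
  match m with O => fun _ => A | S m' => next m' (U m') end.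

Hypothesis Hall : forall N, exists e, F e /\ G N e.

Lemma U_good m : goodP (W m) (U m).
Proof.
  induction m.
  - intros N. destruct (Hall N) as [e [H1 H2]]. exists e. repeat split; auto.
    intros j Hj. unfold W in Hj. lia.
  - simpl. apply next_spec. auto.
Qed.

Lemma U_stable m d j : W m j -> U (m + d) j = U m j.
Proof.
  induction d.
  - intros _. now rewrite Nat.add_0_r.
  - intros Hj. rewrite Nat.add_succ_r. simpl.
    rewrite (proj2 (next_spec _ _ (U_good _))). auto. unfold W in *. lia.
Qed.

Definition lim : config := fun j => U (S (Z.to_nat (Z.abs j))) j.

Lemma lim_U m j : W m j -> lim j = U m j.
Proof.
  intros Hj. unfold lim. unfold W in Hj.
  replace m with (S (Z.to_nat (Z.abs j)) + (m - S (Z.to_nat (Z.abs j))))%nat by lia.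
  rewrite U_stable. reflexivity. unfold W. lia.
Qed.

Lemma konig : is_closed F -> exists xi, F xi /\ GRS_subshift xi.
Proof.
  intros Hcl. exists lim. split.
  - apply NNPP. intros Hn. destruct (Hcl lim Hn) as [n Hn'].
    destruct (U_good (S n) 0%nat) as [e [He1 [_ He3]]].
    apply (Hn' e); auto. intros j Hj. rewrite (lim_U (S n)) by (unfold W; lia).
    apply He3. unfold W; lia.
  - intros i L. set (N := (Z.to_nat (Z.abs i) + L)%nat).
    destruct (U_good (S N) N) as [e [He1 [He2 He3]]].
    assert (E : word_at lim i L = word_at e i L).
    { unfold word_at. apply map_ext_in. intros t Ht. apply in_seq in Ht.
      rewrite (lim_U (S N)) by (unfold W, N; lia). symmetry. apply He3.
      unfold W, N; lia. }
    change (legal (word_at lim i L)). rewrite E.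
    eapply legal_sub; [|exact He2]. apply word_at_sub; unfold N; lia.
Qed.
End Kon.

Lemma upper x F : is_closed F -> (forall xi, GRS_subshift xi -> ~ F xi) ->
  exists N, forall k, (N <= k)%nat -> forall xi, Orb (eta_GRS x k) xi -> ~ F xi.
Proof.
  intros Hcl Hdis.
  destruct (classic (exists N, forall e, F e -> ~ G N e)) as [[N HN]|Hn].
  - exists (2 * N + 2)%nat. intros k Hk xi [n ->] HF.
    apply (HN _ HF). unfold G. rewrite word_at_shift. apply legal_window. lia.
    pose proof (Nat.pow_gt_lin_r 2 (k - 1) ltac:(lia)).
    assert (2 ^ (2 * N + 1) <= 2 ^ (k - 1))%nat by (apply Nat.pow_le_mono_r; lia).
    pose proof (Nat.pow_gt_lin_r 2 (2 * N + 1) ltac:(lia)). lia.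
  - exfalso.
    assert (Hall : forall N, exists e, F e /\ G N e).
    { intros N. apply NNPP. intros H. apply Hn. exists N. intros e He HG. apply H.
      exists e. auto. }
    destruct (konig F Hall Hcl) as [xi [H1 H2]]. exact (Hdis xi H2 H1).
Qed.

Lemma lower x O : is_open O -> (exists xi, GRS_subshift xi /\ O xi) ->
  exists N, forall k, (N <= k)%nat -> exists xi, Orb (eta_GRS x k) xi /\ O xi.
Proof.
  intros Hop [xi [Hxi HO]].
  destruct (Hop xi HO) as [n Hn].
  destruct (Hxi (- Z.of_nat n) (2 * n + 1)%nat) as [j [c Hw]].
  exists (j + 3)%nat. intros k Hk.
  assert (Hsub : subword (word_at xi (- Z.of_nat n) (2 * n + 1)) (subst_iter GRS k x)).
  { eapply subword_trans. exact Hw. rewrite !subst_iter_iterW.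
    replace k with (j + (k - j))%nat by lia. rewrite <- iterW_add.
    apply iterW_subword. apply all_letters. lia. }
  destruct Hsub as [pre [suf Hws]].
  set (w0 := word_at xi (- Z.of_nat n) (2 * n + 1)) in *.
  exists (shift_pow (- (Z.of_nat (length pre) + Z.of_nat n)) (eta_GRS x k)).
  split. { eexists. reflexivity. }
  apply Hn. intros t Ht.
  unfold shift_pow, eta_GRS, per_ext. rewrite Hws.
  assert (Hl0 : length w0 = (2 * n + 1)%nat) by apply length_word_at.
  rewrite Z.mod_small by (rewrite !length_app; lia).
  rewrite app_nth2 by lia. rewrite app_nth1 by lia.
  unfold w0. rewrite nth_word_at by lia. f_equal. lia.
Qed.

Lemma eta_periodic x k : periodic (eta_GRS x k).
Proof.
  unfold eta_GRS, per_ext.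
  assert (Hl : length (subst_iter GRS k x) = (2 ^ k)%nat)
    by (rewrite subst_iter_iterW, length_iterW; simpl; lia).
  pose proof (Nat.pow_nonzero 2 k).
  exists (Z.of_nat (length (subst_iter GRS k x))). split. lia.
  intros j. f_equal. f_equal. rewrite <- (Z.mul_1_l (Z.of_nat _)) at 1.
  apply Z_mod_plus_full.
Qed.

Theorem proposition15 :
  periodically_approximable GRS_subshift /\
  forall x : letter, vietoris_cvg (fun k => Orb (eta_GRS x k)) GRS_subshift.
Proof.
  assert (H : forall x, vietoris_cvg (fun k => Orb (eta_GRS x k)) GRS_subshift).
  { intros x. split. intros F H1 H2. apply upper; auto. intros O H1 H2. apply lower; auto. }
  split; auto. exists (eta_GRS A). split. apply eta_periodic. apply H.
Qed.
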